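(* Let $r\in\mathbb{N}_0$, $m\in\mathbb{N}$ with $m\ge r+1$, $k:=m-r$, and let $x_0\le x_1\le\dots\le x_m$ be real numbers with $x_j<x_{j+r+1}$ for all $0\le j\le m-r-1$; put $d:=2(x_m-x_0)$. Let $(p,q)\in\mathcal{Q}_{m,r}$ satisfy $q-p+2\le m$. If $\varphi,\omega\in\Phi$ satisfy \[ \varphi(t)\le t^{k-1}\int_t^{d}u^{-k}\omega(u)\,du,\qquad t\in(0,d/2], \] then \[ \Lambda_{p,q,r}(x_0,\dots,x_m;\varphi)\le 2^{k^2}\Lambda_r(x_0,\dots,x_m;\omega). \]
   Context: $\Phi$ denotes the set of nondecreasing functions $\varphi\in C[0,\infty]$ with $\varphi(0)=0$. For ordered $y_0\le\dots\le y_n$: $\mathcal{Q}_{n,r}:=\{(p,q):0\le p,q\le n,\ q-p\ge r+1\}$, $y_{-1}:=y_0-(y_n-y_0)$, $y_{n+1}:=y_n+(y_n-y_0)$, $d(p,q):=\min\{y_{q+1}-y_p,y_q-y_{p-1}\}$, and for $\varphi\in\Phi$, $\Lambda_{p,q,r}(y_0,\dots,y_n;\varphi):=\frac{\int_{y_q-y_p}^{d(p,q)}u^{p+r-q-1}\varphi(u)du}{\prod_{i=0}^{p-1}(y_q-y_i)\prod_{i=q+1}^{n}(y_i-y_p)}$ (empty products $=1$), $\Lambda_r(y_0,\dots,y_n;\varphi):=\max_{(p,q)\in\mathcal{Q}_{n,r}}\Lambda_{p,q,r}(y_0,\dots,y_n;\varphi)$. *)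

(* Defs.v *)
From Stdlib Require Import Reals Lra Lia List ZArith.
From Coquelicot Require Import Coquelicot.
Open Scope R_scope.

Definition cont_0_inf (f : R -> R) : Prop :=
  (forall x, 0 <= x -> forall eps, 0 < eps -> exists delta, 0 < delta /\
     forall y, 0 <= y -> Rabs (y - x) < delta -> Rabs (f y - f x) < eps) /\
  (exists L, forall eps, 0 < eps -> exists M, forall y, M <= y -> Rabs (f y - L) < eps).

Definition Phi (f : R -> R) : Prop :=
  cont_0_inf f /\ (forall s t, 0 <= s -> s <= t -> f s <= f t) /\ f 0 = 0.

(* product_{i = a}^{b} f i  (empty product = 1 when b < a) *)
Definition prodR (f : nat -> R) (a b : nat) : R :=
  fold_right Rmult 1 (map f (seq a (S b - a))).

Definition y_next (n : nat) (y : nat -> R) (q : nat) : R :=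
  if Nat.ltb q n then y (S q) else y n + (y n - y 0%nat).

Definition y_prev (n : nat) (y : nat -> R) (p : nat) : R :=
  match p with O => y 0%nat - (y n - y 0%nat) | S p' => y p' end.

Definition dpq (n : nat) (y : nat -> R) (p q : nat) : R :=
  Rmin (y_next n y q - y p) (y q - y_prev n y p).

Definition Lambda_pqr (n : nat) (y : nat -> R) (phi : R -> R) (p q r : nat) : R :=
  RInt (fun u => powerRZ u (Z.of_nat p + Z.of_nat r - Z.of_nat q - 1) * phi u)
       (y q - y p) (dpq n y p q)
  / ((match p with O => 1 | S p' => prodR (fun i => y q - y i) 0 p' end)
     * prodR (fun i => y i - y p) (q + 1) n).

Definition Qnr (n r : nat) : list (nat * nat) :=
  filter (fun pq => Nat.leb (fst pq + r + 1) (snd pq))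
    (flat_map (fun p => map (fun q => (p, q)) (seq 0 (S n))) (seq 0 (S n))).

Fixpoint max_list (l : list R) : R :=
  match l with
  | nil => 0
  | x :: nil => x
  | x :: l' => Rmax x (max_list l')
  end.

(* Lambda_r = max over Q_{n,r} (nonempty whenever n >= r+1) *)
Definition Lambda_r (n : nat) (y : nat -> R) (phi : R -> R) (r : nat) : R :=
  max_list (map (fun pq => Lambda_pqr n y phi (fst pq) (snd pq) r) (Qnr n r)).

(* Main.v *)
Require Import Defs.
From Stdlib Require Import Reals Lra Lia List ZArith.
From Coquelicot Require Import Coquelicot.
Open Scope R_scope.

Lemma Phi_nonneg f x : Phi f -> 0 <= x -> 0 <= f x.
Proof. intros [_ [Hm H0]] Hx. rewrite <- H0. apply Hm; lra. Qed.

Lemma Phi_cont f x : Phi f -> 0 < x -> continuous f x.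
Proof.
  intros [[Hc _] _] Hx. apply continuity_pt_filterlim.
  intros eps Heps. destruct (Hc x (Rlt_le _ _ Hx) eps Heps) as [d [Hd Hy]].
  exists (Rmin d x). split. apply Rmin_pos; lra.
  intros y [_ Hy2]. unfold R_dist in *. simpl in *. unfold R_dist in *.
  apply Hy. 
  - assert (Rabs (y - x) < x) by (eapply Rlt_le_trans; [exact Hy2| apply Rmin_r]).
    apply Rabs_def2 in H. lra.
  - eapply Rlt_le_trans; [exact Hy2| apply Rmin_l].
Qed.

Lemma invpow_cont j x : 0 < x -> continuous (fun v => / v ^ j) x.
Proof.
  intros Hx. apply (@ex_derive_continuous R_AbsRing R_NormedModule). auto_derive. apply pow_nonzero. lra.
Qed.

Lemma pow_cont j x : continuous (fun v => v ^ j) x.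
Proof. apply (@ex_derive_continuous R_AbsRing R_NormedModule). auto_derive. auto. Qed.

Lemma g_cont f j x : Phi f -> 0 < x -> continuous (fun v => / v ^ j * f v) x.
Proof.
  intros Hf Hx. apply (continuous_mult (fun v => / v ^ j) f).
  apply invpow_cont; auto. apply Phi_cont; auto.
Qed.

Lemma exRInt_pos (h : R -> R) a b : (forall z, 0 < z -> continuous h z) -> 0 < a -> 0 < b -> ex_RInt h a b.
Proof.
  intros Hc Ha Hb. apply (@ex_RInt_continuous R_CompleteNormedModule). intros z Hz. apply Hc.
  assert (0 < Rmin a b) by (apply Rmin_pos; auto). lra.
Qed.

Definition pr (l : list R) := fold_right Rmult 1 l.

Lemma pr_app l1 l2 : pr (l1 ++ l2) = pr l1 * pr l2.
Proof. induction l1; simpl; [ring| unfold pr in *; simpl; rewrite IHl1; ring]. Qed.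

Lemma pr_pos (f : nat -> R) l : (forall i, In i l -> 0 < f i) -> 0 < pr (map f l).
Proof.
  induction l; simpl; intros H. lra.
  apply Rmult_lt_0_compat. apply H; auto. apply IHl; auto.
Qed.

Lemma pr_le (f g : nat -> R) c l : 0 <= c -> (forall i, In i l -> 0 <= f i /\ f i <= c * g i) ->
  pr (map f l) <= c ^ length l * pr (map g l).
Proof.
  intros Hc. induction l; simpl; intros H. lra.
  destruct (H a (or_introl eq_refl)) as [H1 H2].
  assert (IH := IHl (fun i Hi => H i (or_intror Hi))).
  assert (0 <= pr (map f l)).
  { clear -H. induction l; simpl. lra. 
    destruct (H a0 (or_intror (or_introl eq_refl))).
    apply Rmult_le_pos; auto. apply IHl. intros i [Hi|Hi]; apply H; simpl; auto. }
  replace (c * c ^ length l * (g a * pr (map g l))) with ((c * g a) * (c ^ length l * pr (map g l))) by ring.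
  apply Rmult_le_compat; auto.
Qed.

Definition Dp (m : nat) (x : nat -> R) (p q : nat) :=
  pr (map (fun i => x q - x i) (seq 0 p)) * pr (map (fun i => x i - x p) (seq (q+1) (m-q))).

Lemma Dp_eq m x p q : ((match p with O => 1 | S p' => prodR (fun i => x q - x i) 0 p' end)
     * prodR (fun i => x i - x p) (q + 1) m) = Dp m x p q.
Proof.
  unfold Dp, prodR, pr. replace (S m - (q+1))%nat with (m - q)%nat by lia.
  destruct p; simpl; auto.
Qed.

Lemma xmono m (x : nat -> R) : (forall j, (j < m)%nat -> x j <= x (S j)) ->
  forall i j, (i <= j <= m)%nat -> x i <= x j.
Proof.
  intros H i j [Hij Hjm]. induction Hij. lra.
  assert (x m0 <= x (S m0)) by (apply H; lia). assert (x i <= x m0) by (apply IHHij; lia). lra.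
Qed.

Lemma Dp_pos m x p q r : (forall j, (j < m)%nat -> x j <= x (S j)) ->
  (forall j, (j + r + 1 <= m)%nat -> x j < x (j + r + 1)%nat) ->
  (q <= m)%nat -> (p + r + 1 <= q)%nat -> 0 < Dp m x p q.
Proof.
  intros Hm Hs Hq Hpq.
  assert (Ha : x p < x q). { eapply Rlt_le_trans. apply (Hs p); lia. apply (xmono m); auto; lia. }
  unfold Dp. apply Rmult_lt_0_compat; apply pr_pos; intros i Hi; apply in_seq in Hi.
  - assert (x i <= x p) by (apply (xmono m); auto; lia). lra.
  - assert (x q <= x i) by (apply (xmono m); auto; lia). lra.
Qed.

Lemma max_list_ge l y : In y l -> y <= max_list l.
Proof.
  induction l as [|a l IH]; simpl. tauto.
  intros [H|H].
  - subst. destruct l. lra. apply Rmax_l.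
  - destruct l. destruct H. eapply Rle_trans. apply IH; auto. apply Rmax_r.
Qed.

Lemma Lambda_r_ge m x f r p q : (q <= m)%nat -> (p + r + 1 <= q)%nat ->
  Lambda_pqr m x f p q r <= Lambda_r m x f r.
Proof.
  intros Hq Hpq. unfold Lambda_r. apply max_list_ge.
  apply (in_map (fun pq => Lambda_pqr m x f (fst pq) (snd pq) r) _ (p,q)).
  unfold Qnr. apply filter_In. split.
  - apply in_flat_map. exists p. split. apply in_seq; lia.
    apply in_map. apply in_seq; lia.
  - simpl. apply Nat.leb_le. lia.
Qed.

Lemma pRZ_neg v n : powerRZ v (- Z.of_nat n) = / v ^ n.
Proof. rewrite powerRZ_neg', <- pow_powerRZ. auto. Qed.

Lemma Lam_eq m x f p q r : 0 < x q - x p -> x q - x p <= dpq m x p q -> (p + r + 1 <= q)%nat ->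
 Lambda_pqr m x f p q r = RInt (fun v => / v ^ (q - p - r + 1) * f v) (x q - x p) (dpq m x p q) / Dp m x p q.
Proof.
  intros Ha Hab Hpq. unfold Lambda_pqr. rewrite Dp_eq. f_equal. apply RInt_ext.
  intros v Hv. rewrite Rmin_left, Rmax_right in Hv by auto. f_equal.
  replace (Z.of_nat p + Z.of_nat r - Z.of_nat q - 1)%Z with (- Z.of_nat (q - p - r + 1))%Z by lia.
  apply pRZ_neg.
Qed.
From Stdlib Require Import Reals Lra Lia List ZArith.
From Coquelicot Require Import Coquelicot.
Open Scope R_scope.

Lemma pr_nonneg (f : nat -> R) l : (forall i, In i l -> 0 <= f i) -> 0 <= pr (map f l).
Proof.
  induction l; simpl; intros H. lra.
  apply Rmult_le_pos. apply H; auto. apply IHl; auto.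
Qed.

Lemma pow2_mono a b : (a <= b)%nat -> 2 ^ a <= 2 ^ b.
Proof. intros; apply Rle_pow; lra || auto. Qed.

Lemma stepA m x p q : (forall j, (j < m)%nat -> x j <= x (S j)) ->
  (q < m)%nat -> (p <= q)%nat ->
  (forall p0, p = S p0 -> x (S q) - x p <= x q - x p0) ->
  x (S q) - x p = dpq m x p q /\
  dpq m x p q * Dp m x p (S q) <= 2 ^ (m + p - q - 1) * Dp m x p q.
Proof.
  intros Hm Hqm Hpq Hc.
  assert (Hb : x (S q) - x p = dpq m x p q).
  { unfold dpq, y_next, y_prev. rewrite (proj2 (Nat.ltb_lt q m) Hqm).
    destruct p as [|p0].
    - rewrite Rmin_left; auto.
      assert (x (S q) <= x m) by (apply (xmono m); auto; lia).
      assert (x 0%nat <= x q) by (apply (xmono m); auto; lia). lra.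
    - rewrite Rmin_left; auto. }
  split; auto. rewrite <- Hb. unfold Dp.
  replace (m - q)%nat with (S (m - S q)) by lia. replace (q+1)%nat with (S q) by lia.
  replace (S q + 1)%nat with (S (S q)) by lia. simpl (seq (S q) (S _)). simpl (map _ (_ :: _)). 
  match goal with |- _ <= _ * (_ * ?R) => 
    change R with ((x (S q) - x p) * pr (map (fun i => x i - x p) (seq (S (S q)) (m - S q)))) end.
  assert (H1 : pr (map (fun i => x (S q) - x i) (seq 0 p)) <= 2 ^ length (seq 0 p) * pr (map (fun i => x q - x i) (seq 0 p))).
  { apply pr_le. lra. intros i Hi. apply in_seq in Hi. destruct p as [|p0]. lia.
    assert (x i <= x p0) by (apply (xmono m); auto; lia).
    assert (x (S p0) <= x q) by (apply (xmono m); auto; lia).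
    assert (x q <= x (S q)) by (apply (xmono m); auto; lia).
    specialize (Hc p0 eq_refl). lra. }
  rewrite length_seq in H1.
  assert (H2 : 2 ^ p <= 2 ^ (m + p - q - 1)) by (apply pow2_mono; lia).
  assert (HR : 0 <= pr (map (fun i => x i - x p) (seq (S (S q)) (m - S q)))).
  { apply pr_nonneg. intros i Hi. apply in_seq in Hi. assert (x p <= x i) by (apply (xmono m); auto; lia). lra. }
  assert (HP : 0 <= pr (map (fun i => x q - x i) (seq 0 p))).
  { apply pr_nonneg. intros i Hi. apply in_seq in Hi. assert (x i <= x q) by (apply (xmono m); auto; lia). lra. }
  assert (Hb0 : 0 <= x (S q) - x p) by (assert (x p <= x (S q)) by (apply (xmono m); auto; lia); lra).
  set (P' := pr (map (fun i => x (S q) - x i) (seq 0 p))) in *.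
  set (P := pr (map (fun i => x q - x i) (seq 0 p))) in *.
  set (R := pr (map (fun i => x i - x p) (seq (S (S q)) (m - S q)))) in *.
  set (b := x (S q) - x p) in *.
  assert (P' <= 2 ^ (m + p - q - 1) * P).
  { eapply Rle_trans. exact H1. apply Rmult_le_compat_r; auto. }
  replace (2 ^ (m + p - q - 1) * (P * (b * R))) with ((2 ^ (m + p - q - 1) * P) * (b * R)) by ring.
  replace (b * (P' * R)) with (P' * (b * R)) by ring.
  apply Rmult_le_compat_r. apply Rmult_le_pos; auto. auto.
Qed.

Lemma stepB m x p0 q : (forall j, (j < m)%nat -> x j <= x (S j)) ->
  (q <= m)%nat -> (S p0 <= q)%nat ->
  ((q < m)%nat -> x q - x p0 < x (S q) - x (S p0)) ->
  x q - x p0 = dpq m x (S p0) q /\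
  dpq m x (S p0) q * Dp m x p0 q <= 2 ^ (m + S p0 - q - 1) * Dp m x (S p0) q.
Proof.
  intros Hm Hqm Hpq Hc.
  assert (Hb : x q - x p0 = dpq m x (S p0) q).
  { unfold dpq, y_next, y_prev. destruct (Nat.ltb q m) eqn:E.
    - apply Nat.ltb_lt in E. rewrite Rmin_right; auto. apply Rlt_le, Hc; auto.
    - apply Nat.ltb_ge in E. assert (q = m) by lia. subst q.
      rewrite Rmin_right; auto.
      assert (x (S p0) <= x m) by (apply (xmono m); auto; lia).
      assert (x 0%nat <= x p0) by (apply (xmono m); auto; lia). lra. }
  split; auto. rewrite <- Hb. unfold Dp.
  rewrite seq_S, map_app, pr_app. simpl (map _ (_ :: nil)).
  match goal with |- _ <= _ * (_ * ?R * _) => 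
    change R with ((x q - x p0) * 1) end.
  assert (H1 : pr (map (fun i => x i - x p0) (seq (q + 1) (m - q))) <= 2 ^ length (seq (q+1) (m-q)) * pr (map (fun i => x i - x (S p0)) (seq (q+1) (m-q)))).
  { apply pr_le. lra. intros i Hi. apply in_seq in Hi.
    assert (x q <= x i) by (apply (xmono m); auto; lia).
    assert (x (S q) <= x i) by (apply (xmono m); auto; lia).
    assert (x (S p0) <= x q) by (apply (xmono m); auto; lia).
    assert (x p0 <= x (S p0)) by (apply (xmono m); auto; lia).
    specialize (Hc ltac:(lia)). lra. }
  rewrite length_seq in H1.
  assert (H2 : 2 ^ (m - q) <= 2 ^ (m + S p0 - q - 1)) by (apply pow2_mono; lia).
  assert (HR : 0 <= pr (map (fun i => x i - x (S p0)) (seq (q + 1) (m - q)))).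
  { apply pr_nonneg. intros i Hi. apply in_seq in Hi. assert (x (S p0) <= x i) by (apply (xmono m); auto; lia). lra. }
  assert (HP : 0 <= pr (map (fun i => x q - x i) (seq 0 p0))).
  { apply pr_nonneg. intros i Hi. apply in_seq in Hi. assert (x i <= x q) by (apply (xmono m); auto; lia). lra. }
  assert (Hb0 : 0 <= x q - x p0) by (assert (x p0 <= x q) by (apply (xmono m); auto; lia); lra).
  set (R' := pr (map (fun i => x i - x p0) (seq (q + 1) (m - q)))) in *.
  set (R := pr (map (fun i => x i - x (S p0)) (seq (q + 1) (m - q)))) in *.
  set (P := pr (map (fun i => x q - x i) (seq 0 p0))) in *.
  set (b := x q - x p0) in *.
  assert (R' <= 2 ^ (m + S p0 - q - 1) * R).
  { eapply Rle_trans. exact H1. apply Rmult_le_compat_r; auto. }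
  replace (2 ^ (m + S p0 - q - 1) * (P * (b * 1) * R)) with ((2 ^ (m + S p0 - q - 1) * R) * (b * P)) by ring.
  replace (b * (P * R')) with (R' * (b * P)) by ring.
  apply Rmult_le_compat_r. apply Rmult_le_pos; auto. auto.
Qed.

Lemma step m x p q r : (forall j, (j < m)%nat -> x j <= x (S j)) ->
  (q <= m)%nat -> (p + r + 1 <= q)%nat -> (q + 1 <= m + p)%nat ->
  exists p' q', (q' <= m)%nat /\ (p' <= p)%nat /\ (q <= q')%nat /\ (q' + p = q + p' + 1)%nat /\
   x q' - x p' = dpq m x p q /\
   dpq m x p q * Dp m x p' q' <= 2 ^ (m + p - q - 1) * Dp m x p q.
Proof.
  intros Hm Hq Hpq Hn.
  destruct (Nat.lt_ge_cases q m) as [Hqm|Hqm].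
  - destruct p as [|p0].
    + exists 0%nat, (S q). destruct (stepA m x 0 q) as [H1 H2]; auto; try lia.
      repeat split; auto; lia.
    + destruct (Rle_lt_dec (x (S q) - x (S p0)) (x q - x p0)) as [Hc|Hc].
      * exists (S p0), (S q). destruct (stepA m x (S p0) q) as [H1 H2]; auto; try lia.
        { intros p1 E; injection E; intros; subst; auto. } repeat split; auto; lia.
      * exists p0, q. destruct (stepB m x p0 q) as [H1 H2]; auto; try lia.
        repeat split; auto; lia.
  - destruct p as [|p0]. lia.
    exists p0, q. destruct (stepB m x p0 q) as [H1 H2]; auto; try lia.
    repeat split; auto; lia.
Qed.
From Stdlib Require Import Reals Lra Lia List ZArith.
From Coquelicot Require Import Coquelicot.
Open Scope R_scope.

Lemma RInt_scal_R (f : R -> R) a b c : ex_RInt f a b -> RInt (fun v => c * f v) a b = c * RInt f a b.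
Proof. intros H. exact (RInt_scal f a b c H). Qed.

Lemma RInt_Chasles_R (f : R -> R) a b c : ex_RInt f a b -> ex_RInt f b c -> RInt f a c = RInt f a b + RInt f b c.
Proof. intros H1 H2. symmetry. exact (RInt_Chasles f a b c H1 H2). Qed.

Lemma a_le_dpq m x p q : (forall j, (j < m)%nat -> x j <= x (S j)) -> (p <= q <= m)%nat ->
  x q - x p <= dpq m x p q.
Proof.
  intros Hm Hpq. unfold dpq, y_next, y_prev. apply Rmin_glb.
  - destruct (Nat.ltb q m) eqn:E.
    + apply Nat.ltb_lt in E. assert (x q <= x (S q)) by (apply (xmono m); auto; lia). lra.
    + apply Nat.ltb_ge in E. assert (q = m) by lia. subst.
      assert (x 0%nat <= x m) by (apply (xmono m); auto; lia). lra.
  - destruct p as [|p0].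
    + assert (x 0%nat <= x m) by (apply (xmono m); auto; lia). lra.
    + assert (x p0 <= x (S p0)) by (apply (xmono m); auto; lia). lra.
Qed.

Lemma apos m x p q r : (forall j, (j < m)%nat -> x j <= x (S j)) ->
  (forall j, (j + r + 1 <= m)%nat -> x j < x (j + r + 1)%nat) ->
  (q <= m)%nat -> (p + r + 1 <= q)%nat -> 0 < x q - x p.
Proof.
  intros Hm Hs Hq Hpq.
  assert (x (p + r + 1)%nat <= x q) by (apply (xmono m); auto; lia).
  assert (x p < x (p + r + 1)%nat) by (apply Hs; lia). lra.
Qed.

Lemma M_ge m x p q r omega : (forall j, (j < m)%nat -> x j <= x (S j)) ->
  (forall j, (j + r + 1 <= m)%nat -> x j < x (j + r + 1)%nat) ->
  (q <= m)%nat -> (p + r + 1 <= q)%nat ->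
  RInt (fun v => / v ^ (q - p - r + 1) * omega v) (x q - x p) (dpq m x p q) <= Dp m x p q * Lambda_r m x omega r.
Proof.
  intros Hm Hs Hq Hpq.
  assert (HD := Dp_pos m x p q r Hm Hs Hq Hpq).
  assert (H := Lambda_r_ge m x omega r p q Hq Hpq).
  rewrite Lam_eq in H; [| apply (apos m x p q r); auto | apply a_le_dpq; auto; lia | auto].
  unfold Rdiv in H. apply Rmult_le_compat_r with (r := Dp m x p q) in H; [|lra].
  rewrite Rmult_assoc, Rinv_l, Rmult_1_r in H by lra. lra.
Qed.

Lemma g_nonneg omega j v : Phi omega -> 0 < v -> 0 <= / v ^ j * omega v.
Proof.
  intros Ho Hv. apply Rmult_le_pos. apply Rlt_le, Rinv_0_lt_compat, pow_lt; auto.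
  apply Phi_nonneg; auto; lra.
Qed.

Lemma M_nonneg m x p q r omega : Phi omega -> (forall j, (j < m)%nat -> x j <= x (S j)) ->
  (forall j, (j + r + 1 <= m)%nat -> x j < x (j + r + 1)%nat) ->
  (q <= m)%nat -> (p + r + 1 <= q)%nat -> 0 <= Lambda_r m x omega r.
Proof.
  intros Ho Hm Hs Hq Hpq.
  assert (HD := Dp_pos m x p q r Hm Hs Hq Hpq).
  assert (H := M_ge m x p q r omega Hm Hs Hq Hpq).
  assert (Ha := apos m x p q r Hm Hs Hq Hpq).
  assert (Hab := a_le_dpq m x p q Hm ltac:(lia)).
  assert (0 <= RInt (fun v => / v ^ (q - p - r + 1) * omega v) (x q - x p) (dpq m x p q)).
  { apply RInt_ge_0; auto. apply exRInt_pos; try lra. intros; apply g_cont; auto.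
    intros v Hv. apply g_nonneg; auto; lra. }
  destruct (Rle_lt_dec 0 (Lambda_r m x omega r)); auto.
  assert (Dp m x p q * Lambda_r m x omega r < 0). { apply Ropp_lt_cancel. rewrite Ropp_0, Ropp_mult_distr_r. apply Rmult_lt_0_compat; lra. }
  lra.
Qed.

Lemma pw1 a v e n w : 0 < a <= v -> 0 <= w -> a ^ n * (/ v ^ (e + n) * w) <= / v ^ e * w.
Proof.
  intros [Ha Hv] Hw. rewrite pow_add, Rinv_mult.
  assert (HA : 0 < a ^ n) by (apply pow_lt; auto).
  assert (HV : a ^ n <= v ^ n) by (apply pow_incr; lra).
  assert (HE : 0 < / v ^ e) by (apply Rinv_0_lt_compat, pow_lt; lra).
  assert (HV' : 0 < v ^ n) by lra.
  assert (a ^ n * / v ^ n <= 1).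
  { apply Rmult_le_reg_r with (v ^ n); auto. rewrite Rmult_assoc, Rinv_l by lra. lra. }
  replace (a ^ n * (/ v ^ e * / v ^ n * w)) with ((a ^ n * / v ^ n) * (/ v ^ e * w)) by ring.
  rewrite <- (Rmult_1_l (/ v ^ e * w)) at 2. apply Rmult_le_compat_r; auto.
  apply Rmult_le_pos; lra.
Qed.

Lemma pow_bound n : 1 + 2 ^ (n * n + 1) * 2 ^ n <= 2 ^ (S n * S n + 1).
Proof.
  replace (2 ^ (n * n + 1) * 2 ^ n) with (2 ^ (n * n + 1 + n)) by (rewrite pow_add; auto).
  replace (S n * S n + 1)%nat with ((n * n + 1 + n) + S n)%nat by lia.
  rewrite (pow_add 2 (n * n + 1 + n) (S n)). assert (1 <= 2 ^ (n * n + 1 + n)) by (apply pow_R1_Rle; lra).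
  assert (2 <= 2 ^ S n) by (rewrite <- (pow_1 2) at 1; apply Rle_pow; lia || lra).
  assert (2 ^ (n * n + 1 + n) * 2 <= 2 ^ (n * n + 1 + n) * 2 ^ S n) by (apply Rmult_le_compat_l; lra).
  lra.
Qed.
From Stdlib Require Import Reals Lra Lia List ZArith.
From Coquelicot Require Import Coquelicot.
Open Scope R_scope.

Lemma chain m x r omega : (r + 1 <= m)%nat -> Phi omega ->
  (forall j, (j < m)%nat -> x j <= x (S j)) ->
  (forall j, (j + r + 1 <= m)%nat -> x j < x (j + r + 1)%nat) ->
  forall n p q, (q <= m)%nat -> (p + r + 1 <= q)%nat -> (q + n = m + p)%nat ->
  RInt (fun v => / v ^ (m - r) * omega v) (x q - x p) (2 * (x m - x 0%nat)) * (x q - x p) ^ n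
   <= 2 ^ (n * n + 1) * (x q - x p) * Dp m x p q * Lambda_r m x omega r.
Proof.
  intros Hrm Ho Hm Hs n. induction n as [|n IH]; intros p q Hq Hpq Hn.
  - assert (p = 0%nat) by lia. assert (q = m) by lia. subst p q.
    set (a := x m - x 0%nat).
    assert (Ha : 0 < a) by (apply (apos m x 0 m r); auto).
    assert (Hd : dpq m x 0 m = 2 * a).
    { unfold dpq, y_next, y_prev. rewrite Nat.ltb_irrefl. unfold a, Rmin. destruct Rle_dec; lra. }
    assert (HD : Dp m x 0 m = 1).
    { unfold Dp. rewrite Nat.sub_diag. simpl. unfold pr. simpl. ring. }
    assert (HM := M_ge m x 0 m r omega Hm Hs ltac:(lia) ltac:(lia)).
    rewrite Hd, HD in HM. fold a in HM. rewrite HD.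
    assert (HM0 : 0 <= Lambda_r m x omega r) by (apply (M_nonneg m x 0 m r omega); auto; lia).
    simpl pow. rewrite Rmult_1_r.
    apply Rle_trans with (RInt (fun v => (2 * a) * (/ v ^ (m - 0 - r + 1) * omega v)) a (2 * a)).
    + apply RInt_le; try lra.
      * apply exRInt_pos; try lra. intros; apply g_cont; auto.
      * apply exRInt_pos; try lra. intros z Hz.
        apply (continuous_mult (fun _ => 2 * a) (fun v => / v ^ (m - 0 - r + 1) * omega v)).
        apply continuous_const. apply g_cont; auto.
      * intros v Hv. replace (m - 0 - r + 1)%nat with (S (m - r)) by lia.
        simpl pow. rewrite Rinv_mult.
        assert (0 <= / v ^ (m - r) * omega v) by (apply g_nonneg; auto; lra).
        assert (1 <= 2 * a * / v).
        { apply Rmult_le_reg_r with v. lra. rewrite Rmult_assoc, Rinv_l by lra. lra. }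
        replace (2 * a * (/ v * / v ^ (m - r) * omega v)) with ((2 * a * / v) * (/ v ^ (m - r) * omega v)) by ring.
        rewrite <- (Rmult_1_l (/ v ^ (m - r) * omega v)) at 1. apply Rmult_le_compat_r; auto.
    + rewrite RInt_scal_R.
      * apply Rle_trans with (2 * a * (1 * Lambda_r m x omega r)); [apply Rmult_le_compat_l; lra | right; simpl; ring].
      * apply exRInt_pos; try lra. intros; apply g_cont; auto.
  - assert (Hq1 : (q + 1 <= m + p)%nat) by lia.
    destruct (step m x p q r Hm Hq Hpq Hq1) as [p' [q' [Hq' [Hp' [Hqq' [Hpq' [Hb Hstep]]]]]]].
    assert (IH' := IH p' q' Hq' ltac:(lia) ltac:(lia)).
    rewrite Hb in IH'.
    set (a := x q - x p) in *. set (b := dpq m x p q) in *.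
    set (d := 2 * (x m - x 0%nat)) in *.
    set (g := fun v => / v ^ (m - r) * omega v) in *.
    set (M := Lambda_r m x omega r) in *.
    assert (Ha : 0 < a) by (apply (apos m x p q r); auto).
    assert (Hab : a <= b) by (unfold a, b; apply a_le_dpq; auto; lia).
    assert (Hbd : b <= d).
    { unfold d. rewrite <- Hb. assert (x q' <= x m) by (apply (xmono m); auto; lia).
      assert (x 0%nat <= x p') by (apply (xmono m); auto; lia).
      assert (x p' <= x q') by (apply (xmono m); auto; lia). lra. }
    assert (HM0 : 0 <= M) by (apply (M_nonneg m x p q r omega); auto).
    assert (HD : 0 < Dp m x p q) by (apply (Dp_pos m x p q r); auto).
    assert (HD' : 0 < Dp m x p' q') by (apply (Dp_pos m x p' q' r); auto; lia).
    assert (Hgc : forall z, 0 < z -> continuous g z) by (intros; apply g_cont; auto).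
    assert (Hex1 : ex_RInt g a b) by (apply exRInt_pos; auto; lra).
    assert (Hex2 : ex_RInt g b d) by (apply exRInt_pos; auto; lra).
    rewrite (RInt_Chasles_R g a b d Hex1 Hex2).
    assert (HT : 0 <= RInt g b d) by (apply RInt_ge_0; auto; intros; apply g_nonneg; auto; lra).
    assert (P1 : RInt g a b * a ^ S n <= a * (Dp m x p q * M)).
    { assert (HMg := M_ge m x p q r omega Hm Hs Hq Hpq). fold a b M in HMg.
      rewrite Rmult_comm, <- RInt_scal_R by auto.
      apply Rle_trans with (RInt (fun v => a * (/ v ^ (q - p - r + 1) * omega v)) a b).
      - apply RInt_le; auto.
        + apply exRInt_pos; try lra. intros z Hz.
          apply (continuous_mult (fun _ => a ^ S n) g). apply continuous_const. auto.
        + apply exRInt_pos; try lra. intros z Hz.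
          apply (continuous_mult (fun _ => a) (fun v => / v ^ (q - p - r + 1) * omega v)).
          apply continuous_const. apply g_cont; auto.
        + intros v Hv. unfold g. replace (m - r)%nat with ((q - p - r + 1) + n)%nat by lia.
          simpl pow. rewrite Rmult_assoc. apply Rmult_le_compat_l. lra.
          apply pw1. lra. apply Phi_nonneg; auto; lra.
      - rewrite RInt_scal_R. apply Rmult_le_compat_l; lra.
        apply exRInt_pos; try lra. intros; apply g_cont; auto. }
    assert (P2 : RInt g b d * a ^ S n <= 2 ^ (n * n + 1) * 2 ^ n * Dp m x p q * M * a).
    { apply Rle_trans with (RInt g b d * b ^ n * a).
      - simpl pow. rewrite (Rmult_comm a (a ^ n)), <- Rmult_assoc. apply Rmult_le_compat_r. lra.
        apply Rmult_le_compat_l; auto. apply pow_incr; lra.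
      - apply Rmult_le_compat_r. lra. eapply Rle_trans. exact IH'.
        replace (m + p - q - 1)%nat with n in Hstep by lia.
        replace (2 ^ (n * n + 1) * b * Dp m x p' q' * M) with ((2 ^ (n * n + 1) * M) * (b * Dp m x p' q')) by ring.
        replace (2 ^ (n * n + 1) * 2 ^ n * Dp m x p q * M) with ((2 ^ (n * n + 1) * M) * (2 ^ n * Dp m x p q)) by ring.
        apply Rmult_le_compat_l; auto. apply Rmult_le_pos; auto. apply pow_le; lra. }
    assert (PB := pow_bound n).
    assert (0 <= a * Dp m x p q * M) by (apply Rmult_le_pos; [apply Rmult_le_pos|]; lra).
    assert ((1 + 2 ^ (n * n + 1) * 2 ^ n) * (a * Dp m x p q * M) <= 2 ^ (S n * S n + 1) * (a * Dp m x p q * M)) by (apply Rmult_le_compat_r; auto).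
    nra.
Qed.
From Stdlib Require Import Reals Lra Lia List ZArith.
From Coquelicot Require Import Coquelicot.
Open Scope R_scope.

Lemma G_deriv (g : R -> R) b t : (forall z, 0 < z -> continuous g z) -> 0 < b -> 0 < t ->
  is_derive (fun u => RInt g u b) t (- g t).
Proof.
  intros Hg Hb Ht.
  apply (is_derive_RInt' (V := R_CompleteNormedModule) g (fun u => RInt g u b) t b).
  - exists (mkposreal (t/2) ltac:(lra)). intros y Hy.
    apply (RInt_correct (V := R_CompleteNormedModule)).
    assert (Rabs (y - t) < t / 2) by exact Hy.
    apply Rabs_def2 in H. apply exRInt_pos; auto; lra.
  - auto.
Qed.

Lemma G_cont (g : R -> R) b t : (forall z, 0 < z -> continuous g z) -> 0 < b -> 0 < t ->
  continuous (fun u => RInt g u b) t.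
Proof.
  intros Hg Hb Ht. apply (@ex_derive_continuous R_AbsRing R_NormedModule).
  exists (- g t). apply G_deriv; auto.
Qed.

Lemma RInt_plus_R (f h : R -> R) a b : ex_RInt f a b -> ex_RInt h a b -> RInt (fun v => f v + h v) a b = RInt f a b + RInt h a b.
Proof. intros H1 H2. exact (RInt_plus f h a b H1 H2). Qed.

Lemma RInt_minus_R (f h : R -> R) a b : ex_RInt f a b -> ex_RInt h a b -> RInt (fun v => f v - h v) a b = RInt f a b - RInt h a b.
Proof. intros H1 H2. exact (RInt_minus f h a b H1 H2). Qed.

Lemma cont_plus (f h : R -> R) t : continuous f t -> continuous h t -> continuous (fun v => f v + h v) t.
Proof. intros; apply (continuous_plus f h); auto. Qed.

Lemma cont_minus (f h : R -> R) t : continuous f t -> continuous h t -> continuous (fun v => f v - h v) t.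
Proof. intros; apply (continuous_minus f h); auto. Qed.

Lemma cont_mult (f h : R -> R) t : continuous f t -> continuous h t -> continuous (fun v => f v * h v) t.
Proof. intros; apply (continuous_mult f h); auto. Qed.

Lemma cont_const (c t : R) : continuous (fun _ => c) t.
Proof. apply continuous_const. Qed.

Lemma ftc (g w : R -> R) a b e : (forall z, 0 < z -> continuous g z) -> (forall z, 0 < z -> 0 <= g z) ->
  0 < a <= b -> (forall t, 0 < t -> t ^ (S e) * g t = w t) -> (forall z, 0 < z -> continuous w z) ->
  RInt (fun u => u ^ e * RInt g u b) a b <= RInt w a b.
Proof.
  intros Hg Hg0 [Ha Hab] Hw Hwc.
  set (G := fun u => RInt g u b).
  assert (Hder : forall t, Rmin a b <= t <= Rmax a b ->
     is_derive (fun t => t ^ (S e) * G t) t (INR (S e) * t ^ e * G t - w t)).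
  { intros t Ht. rewrite Rmin_left, Rmax_right in Ht by lra.
    assert (H1 := is_derive_pow (fun x => x) (S e) t 1 (is_derive_id t)).
    assert (H2 := G_deriv g b t Hg ltac:(lra) ltac:(lra)).
    assert (H3 := is_derive_mult _ _ t _ _ H1 H2 Rmult_comm).
    replace (INR (S e) * t ^ e * G t - w t) with
      (plus (mult (INR (S e) * 1 * t ^ Init.Nat.pred (S e)) (G t)) (mult (t ^ S e) (- g t))).
    exact H3. rewrite <- (Hw t) by lra. unfold plus, mult; simpl. unfold G. ring. }
  assert (Hcont : forall t, Rmin a b <= t <= Rmax a b -> continuous (fun t => INR (S e) * t ^ e * G t - w t) t).
  { intros t Ht. rewrite Rmin_left, Rmax_right in Ht by lra.
    apply cont_minus. apply cont_mult. apply cont_mult. apply cont_const. apply pow_cont.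
    apply G_cont; auto; lra. apply Hwc; lra. }
  assert (HI := is_RInt_derive _ _ a b Hder Hcont).
  apply is_RInt_unique in HI.
  assert (HGc : forall z, 0 < z -> continuous (fun u => u ^ e * G u) z).
  { intros z Hz. apply cont_mult. apply pow_cont. apply G_cont; auto; lra. }
  assert (Hex1 : ex_RInt (fun u => u ^ e * G u) a b) by (apply exRInt_pos; auto; lra).
  assert (Hex2 : ex_RInt w a b) by (apply exRInt_pos; auto; lra).
  rewrite (RInt_ext (V := R_CompleteNormedModule) (fun t => INR (S e) * t ^ e * G t - w t) (fun t => INR (S e) * (t ^ e * G t) - w t)) in HI by (intros; rewrite Rmult_assoc; reflexivity).
  rewrite RInt_minus_R, RInt_scal_R in HI; auto.
  2: { apply (ex_RInt_scal (V := R_NormedModule) (fun t => t ^ e * G t) a b (INR (S e))); auto. }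
  assert (HGb : G b = 0) by (unfold G; apply (RInt_point (V := R_CompleteNormedModule))).
  assert (HGa : 0 <= G a) by (unfold G; apply RInt_ge_0; auto; [apply exRInt_pos; auto; lra | intros; apply Hg0; lra]).
  assert (Hpa : 0 <= a ^ S e) by (apply pow_le; lra).
  assert (HA : 0 <= RInt (fun u => u ^ e * G u) a b).
  { apply RInt_ge_0; auto. intros u Hu. apply Rmult_le_pos. apply pow_le; lra.
    unfold G. apply RInt_ge_0. lra. apply exRInt_pos; auto; lra. intros; apply Hg0; lra. }
  assert (HINR : 1 <= INR (S e)) by (apply (le_INR 1); lia).
  change (INR (S e) * RInt (fun v => v ^ e * G v) a b - RInt w a b = b ^ S e * G b - a ^ S e * G a) in HI.
  rewrite HGb in HI. change (RInt (fun u => u ^ e * G u) a b <= RInt w a b).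
  assert (0 <= a ^ S e * G a) by (apply Rmult_le_pos; auto).
  nra.
Qed.
From Stdlib Require Import Reals Lra Lia List ZArith.
From Coquelicot Require Import Coquelicot.
Open Scope R_scope.

Theorem lemma3p2 (r m : nat) (x : nat -> R) (p q : nat) (phi omega : R -> R) :
  (r + 1 <= m)%nat ->
  (forall j, (j < m)%nat -> x j <= x (S j)) ->
  (forall j, (j + r + 1 <= m)%nat -> x j < x (j + r + 1)%nat) ->
  (p <= m)%nat -> (q <= m)%nat -> (p + r + 1 <= q)%nat ->
  (q + 2 <= m + p)%nat ->
  Phi phi -> Phi omega ->
  (forall t, 0 < t <= 2 * (x m - x 0%nat) / 2 ->
     phi t <= t ^ (m - r - 1) *
       RInt (fun u => powerRZ u (- Z.of_nat (m - r)) * omega u) t (2 * (x m - x 0%nat))) ->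
  Lambda_pqr m x phi p q r <= 2 ^ ((m - r) * (m - r)) * Lambda_r m x omega r.
Proof.
  intros Hrm Hm Hs Hp Hq Hpq Hn2 Hphi Ho Hhyp.
  set (e := (m + p - q - 2)%nat).
  assert (Hq1 : (q + 1 <= m + p)%nat) by lia.
  destruct (step m x p q r Hm Hq Hpq Hq1) as [p' [q' [Hq' [Hp' [Hqq' [Hpq' [Hb Hstep]]]]]]].
  assert (Hch := chain m x r omega Hrm Ho Hm Hs (S e) p' q' Hq' ltac:(lia) ltac:(unfold e; lia)).
  rewrite Hb in Hch.
  assert (Ha : 0 < x q - x p) by (apply (apos m x p q r); auto).
  assert (Hab : x q - x p <= dpq m x p q) by (apply a_le_dpq; auto; lia).
  rewrite Lam_eq; auto.
  set (a := x q - x p) in *. set (b := dpq m x p q) in *.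
  set (d := 2 * (x m - x 0%nat)) in *.
  set (g := fun v => / v ^ (m - r) * omega v) in *.
  set (M := Lambda_r m x omega r) in *.
  assert (Hbd : b <= d / 2).
  { unfold d. rewrite <- Hb. assert (x q' <= x m) by (apply (xmono m); auto; lia).
    assert (x 0%nat <= x p') by (apply (xmono m); auto; lia). lra. }
  assert (HM0 : 0 <= M) by (apply (M_nonneg m x p q r omega); auto).
  assert (HD : 0 < Dp m x p q) by (apply (Dp_pos m x p q r); auto).
  assert (HD' : 0 < Dp m x p' q') by (apply (Dp_pos m x p' q' r); auto; lia).
  assert (Hgc : forall z, 0 < z -> continuous g z) by (intros; apply g_cont; auto).
  assert (Hg0 : forall z, 0 < z -> 0 <= g z) by (intros; apply g_nonneg; auto).
  set (G := fun u => RInt g u b).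
  set (T := RInt g b d).
  assert (HT : 0 <= T) by (apply RInt_ge_0; [lra| apply exRInt_pos; auto; lra | intros; apply Hg0; lra]).
  assert (HGc : forall z, 0 < z -> continuous G z) by (intros; apply G_cont; auto; lra).
  assert (S1 : RInt (fun v => / v ^ (q - p - r + 1) * phi v) a b <=
               RInt (fun u => u ^ e * G u + u ^ e * T) a b).
  { apply RInt_le; auto.
    - apply exRInt_pos; try lra. intros; apply g_cont; auto.
    - apply exRInt_pos; try lra. intros z Hz. apply cont_plus; apply cont_mult; auto using pow_cont, cont_const.
    - intros u Hu.
      assert (Hh := Hhyp u ltac:(lra)).
      rewrite (RInt_ext (V := R_CompleteNormedModule) _ g) in Hh by (intros; unfold g; rewrite pRZ_neg; reflexivity).
      rewrite (RInt_Chasles_R g u b d) in Hh by (apply exRInt_pos; auto; lra).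
      fold (G u) T in Hh.
      assert (Hi : 0 <= / u ^ (q - p - r + 1)) by (apply Rlt_le, Rinv_0_lt_compat, pow_lt; lra).
      apply Rmult_le_compat_l with (r := / u ^ (q - p - r + 1)) in Hh; auto.
      eapply Rle_trans. exact Hh. right.
      replace (m - r - 1)%nat with ((q - p - r + 1) + e)%nat by (unfold e; lia).
      rewrite (pow_add u (q - p - r + 1) e). field. apply pow_nonzero; lra. }
  assert (Hex1 : ex_RInt (fun u => u ^ e * G u) a b).
  { apply exRInt_pos; try lra. intros z Hz. apply cont_mult; auto using pow_cont. }
  assert (Hex2 : ex_RInt (fun u => u ^ e) a b) by (apply exRInt_pos; try lra; intros; apply pow_cont).
  rewrite RInt_plus_R in S1; auto.
  2: { apply exRInt_pos; try lra. intros z Hz. apply cont_mult; auto using pow_cont, cont_const. }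
  rewrite (RInt_ext (V := R_CompleteNormedModule) (fun u => u ^ e * T) (fun u => T * u ^ e)) in S1 by (intros; apply Rmult_comm).
  rewrite RInt_scal_R in S1; auto.
  assert (S3 : RInt (fun u => u ^ e * G u) a b <= Dp m x p q * M).
  { eapply Rle_trans.
    - apply (ftc g (fun v => / v ^ (q - p - r + 1) * omega v) a b e); auto.
      intros t Ht. unfold g. replace (m - r)%nat with (S e + (q - p - r + 1))%nat by (unfold e; lia).
      rewrite pow_add. field. split; apply pow_nonzero; lra.
      intros; apply g_cont; auto.
    - apply (M_ge m x p q r omega); auto. }
  assert (S4 : RInt (fun u => u ^ e) a b <= b ^ S e).
  { eapply Rle_trans. apply (RInt_le _ (fun _ => b ^ e)); auto.
    apply (ex_RInt_const (V := R_NormedModule)).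
    intros u Hu. apply pow_incr. lra.
    rewrite (RInt_const (V := R_CompleteNormedModule)). change (scal (b - a) (b ^ e)) with ((b - a) * b ^ e).
    simpl pow. assert (0 <= b ^ e) by (apply pow_le; lra). nra. }
  assert (S5 : T * b ^ S e <= 2 ^ (S e * S e + 1) * 2 ^ (S e) * Dp m x p q * M).
  { eapply Rle_trans. exact Hch.
    replace (m + p - q - 1)%nat with (S e) in Hstep by (unfold e; lia).
    replace (2 ^ (S e * S e + 1) * b * Dp m x p' q' * M) with ((2 ^ (S e * S e + 1) * M) * (b * Dp m x p' q')) by ring.
    replace (2 ^ (S e * S e + 1) * 2 ^ S e * Dp m x p q * M) with ((2 ^ (S e * S e + 1) * M) * (2 ^ S e * Dp m x p q)) by ring.
    apply Rmult_le_compat_l; auto. apply Rmult_le_pos; auto. apply pow_le; lra. }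
  assert (PB := pow_bound (S e)).
  assert (PK : 2 ^ (S (S e) * S (S e) + 1) <= 2 ^ ((m - r) * (m - r))) by (apply pow2_mono; unfold e; nia).
  assert (S6 : RInt (fun v => / v ^ (q - p - r + 1) * phi v) a b <= 2 ^ ((m - r) * (m - r)) * M * Dp m x p q).
  { assert (T * RInt (fun u => u ^ e) a b <= T * b ^ S e) by (apply Rmult_le_compat_l; auto).
    assert (0 <= Dp m x p q * M) by (apply Rmult_le_pos; lra).
    assert ((1 + 2 ^ (S e * S e + 1) * 2 ^ S e) * (Dp m x p q * M) <= 2 ^ (S (S e) * S (S e) + 1) * (Dp m x p q * M)) by (apply Rmult_le_compat_r; auto).
    assert (2 ^ (S (S e) * S (S e) + 1) * (Dp m x p q * M) <= 2 ^ ((m - r) * (m - r)) * (Dp m x p q * M)) by (apply Rmult_le_compat_r; auto).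
    nra. }
  unfold Rdiv. apply Rmult_le_reg_r with (Dp m x p q); auto.
  rewrite Rmult_assoc, Rinv_l, Rmult_1_r by lra. exact S6.
Qed.
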